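(* Let $\Gamma$ be a graph. If $\Gamma$ is edge-transitive (respectively, arc-transitive), then $\Gamma$ is lobe-transitive and every lobe of $\Gamma$, regarded as a graph in its own right, is edge-transitive (respectively, arc-transitive).
   Context: All graphs are simple, connected, and finite or countably infinite. For edges $e_1,e_2$ write $e_1\cong e_2$ if $e_1=e_2$ or they lie on a common cycle; a lobe is the subgraph induced by an equivalence class of this relation (a cut-edge with its ends, or a maximal biconnected subgraph). $\Gamma$ is lobe-transitive if $\mathrm{Aut}(\Gamma)$ acts transitively on the set of lobes. An arc is an ordered pair of adjacent vertices; arc-transitive means the automorphism group acts transitively on arcs. *)

(* Defs.v *)
From mathcomp Require Import all_boot.
From Stdlib Require Import Relations.
Set Implicit Arguments. Unset Strict Implicit. Unset Printing Implicit Defensive.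

(* A graph is a vertex type V with an adjacency relation adj (Prop-valued).
   Edges are represented by ordered pairs (a,b) with adj a b, identified up to swap. *)

Definition simple_graph (V : Type) (adj : V -> V -> Prop) : Prop :=
  (forall x y, adj x y -> adj y x) /\ (forall x, ~ adj x x).

Definition connected_graph (V : Type) (adj : V -> V -> Prop) : Prop :=
  forall x y, clos_refl_trans V adj x y.

Definition same_edge (V : Type) (e f : V * V) : Prop :=
  (e.1 = f.1 /\ e.2 = f.2) \/ (e.1 = f.2 /\ e.2 = f.1).

Definition is_edge (V : Type) (adj : V -> V -> Prop) (e : V * V) : Prop := adj e.1 e.2.

Definition is_cycle (V : Type) (adj : V -> V -> Prop) (n : nat) (c : nat -> V) : Prop :=
  3 <= n /\
  (forall i j, i < n -> j < n -> c i = c j -> i = j) /\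
  (forall i, i < n -> adj (c i) (c (i.+1 %% n))).

Definition edge_on_cycle (V : Type) (n : nat) (c : nat -> V) (e : V * V) : Prop :=
  exists2 i, i < n & same_edge e (c i, c (i.+1 %% n)).

Definition edge_cong (V : Type) (adj : V -> V -> Prop) (e1 e2 : V * V) : Prop :=
  same_edge e1 e2 \/
  exists n c, is_cycle adj n c /\ edge_on_cycle n c e1 /\ edge_on_cycle n c e2.

Definition is_aut (V : Type) (adj : V -> V -> Prop) (g : V -> V) : Prop :=
  bijective g /\ forall x y, adj x y <-> adj (g x) (g y).

Definition edge_transitive (V : Type) (adj : V -> V -> Prop) : Prop :=
  forall e f, is_edge adj e -> is_edge adj f ->
    exists g, is_aut adj g /\ same_edge (g e.1, g e.2) f.

Definition arc_transitive (V : Type) (adj : V -> V -> Prop) : Prop :=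
  forall a b c d, adj a b -> adj c d ->
    exists g, is_aut adj g /\ g a = c /\ g b = d.

(* The lobe containing the edge e0: its edges are the edges f with f ≅ e0,
   its vertices the endpoints of those edges. *)
Definition lobe_vertex (V : Type) (adj : V -> V -> Prop) (e0 : V * V) (v : V) : Prop :=
  exists w, adj v w /\ edge_cong adj (v, w) e0.

Definition lobe_type (V : Type) (adj : V -> V -> Prop) (e0 : V * V) : Type :=
  {v : V | lobe_vertex adj e0 v}.

Definition lobe_adj (V : Type) (adj : V -> V -> Prop) (e0 : V * V)
  (x y : lobe_type adj e0) : Prop :=
  adj (proj1_sig x) (proj1_sig y) /\ edge_cong adj (proj1_sig x, proj1_sig y) e0.

Definition lobe_transitive (V : Type) (adj : V -> V -> Prop) : Prop :=
  forall e1 e2, is_edge adj e1 -> is_edge adj e2 ->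
    exists g, is_aut adj g /\
      forall f, is_edge adj f ->
        (edge_cong adj f e1 <-> edge_cong adj (g f.1, g f.2) e2).

(* Main.v *)
Require Import Defs.
From mathcomp Require Import all_boot.
From Stdlib Require Import Setoid Classical ProofIrrelevance.
Set Implicit Arguments. Unset Strict Implicit. Unset Printing Implicit Defensive.

Fixpoint walk (V : Type) (adj : V -> V -> Prop) (x : V) (p : seq V) : Prop :=
  if p is y :: p' then adj x y /\ walk adj y p' else True.
Fixpoint onpath (V : Type) (e : V * V) (x : V) (p : seq V) : Prop :=
  if p is y :: p' then same_edge e (x, y) \/ onpath e y p' else False.
Definition cyc (V : eqType) (adj : V -> V -> Prop) (s : seq V) : Prop :=
  if s is x :: p then walk adj (last x p) s /\ uniq s /\ 3 <= size s else False.
Definition oncyc (V : Type) (e : V * V) (s : seq V) : Prop :=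
  if s is x :: p then onpath e (last x p) s else False.

Lemma same_sym (V : Type) (e f : V * V) : same_edge e f -> same_edge f e.
Proof. case: e f => [a b] [c d]; rewrite /same_edge /=; intuition congruence. Qed.
Lemma same_trans (V : Type) (e f g : V * V) : same_edge e f -> same_edge f g -> same_edge e g.
Proof. case: e f g => [a b] [c d] [u v]; rewrite /same_edge /=; intuition congruence. Qed.
Lemma same_swap (V : Type) (e : V * V) x y : same_edge e (x, y) -> same_edge e (y, x).
Proof. case: e => [a b]; rewrite /same_edge /=; intuition congruence. Qed.
Lemma same_refl (V : Type) (e : V * V) : same_edge e e.
Proof. by left. Qed.

Lemma walk_cat (V : Type) (adj : V -> V -> Prop) x p q :
  walk adj x (p ++ q) <-> walk adj x p /\ walk adj (last x p) q.
Proof. elim: p x => [|y p IH] x /=; first by tauto. rewrite IH; tauto. Qed.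

Lemma onpath_cat (V : Type) (e : V * V) x p q :
  onpath e x (p ++ q) <-> onpath e x p \/ onpath e (last x p) q.
Proof. elim: p x => [|y p IH] x /=; first by tauto. rewrite IH; tauto. Qed.

Lemma walk_rev (V : Type) (adj : V -> V -> Prop) (sym : forall x y, adj x y -> adj y x) x p y :
  walk adj x (rcons p y) -> walk adj y (rcons (rev p) x).
Proof.
elim: p x => [|z p IH] x /=; first by move=> [/sym ? _].
move=> [axz /IH h]. rewrite rev_cons -cats1 walk_cat last_rcons /=. split=> //. split=>//. exact: sym.
Qed.

Lemma onpath_rev (V : Type) (e : V * V) x p y :
  onpath e x (rcons p y) -> onpath e y (rcons (rev p) x).
Proof.
elim: p x => [|z p IH] x /=; first by case=> [h|[]]; left; apply: same_swap.
move=> [h|/IH h]; rewrite rev_cons -cats1 onpath_cat last_rcons /=.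
  by right; left; apply: same_swap.
by left.
Qed.

Lemma walk_split (V : Type) (adj : V -> V -> Prop) x p y q :
  walk adj (last x (p ++ y :: q)) (x :: p ++ y :: q) <-> walk adj x (rcons p y) /\ walk adj y (rcons q x).
Proof.
rewrite last_cat /= walk_cat -!cats1 !walk_cat /=; tauto.
Qed.

Lemma oncyc_split (V : Type) (e : V * V) x p y q :
  oncyc e (x :: p ++ y :: q) <-> onpath e x (rcons p y) \/ onpath e y (rcons q x).
Proof.
rewrite /oncyc last_cat /= onpath_cat -!cats1 !onpath_cat /=; tauto.
Qed.

Lemma oncyc_rot (V : Type) (e : V * V) p q : oncyc e (p ++ q) -> oncyc e (q ++ p).
Proof.
case: p => [|x p]; first by rewrite cats0.
case: q => [|y q]; first by rewrite cats0.
change (oncyc e (x :: p ++ y :: q) -> oncyc e (y :: q ++ x :: p)).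
rewrite !oncyc_split; tauto.
Qed.

Lemma cyc_rot (V : eqType) (adj : V -> V -> Prop) p q : cyc adj (p ++ q) -> cyc adj (q ++ p).
Proof.
case: p => [|x p]; first by rewrite cats0.
case: q => [|y q]; first by rewrite cats0.
change (walk adj (last x (p ++ y :: q)) (x :: p ++ y :: q) /\ uniq (x :: p ++ y :: q) /\ 3 <= size (x :: p ++ y :: q) -> walk adj (last y (q ++ x :: p)) (y :: q ++ x :: p) /\ uniq (y :: q ++ x :: p) /\ 3 <= size (y :: q ++ x :: p)).
rewrite !walk_split => -[h1 [h2 h3]]. split; first tauto.
rewrite -!cat_cons uniq_catC. split=> //.
move: h3; rewrite -!cat_cons !size_cat addnC. done.
Qed.
Lemma onpath_same (V : Type) (e f : V * V) x p : same_edge e f -> onpath e x p -> onpath f x p.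
Proof.
move=> ef; elim: p x => [|y p IH] x //= [h|h]; last by right; apply: IH.
left; apply: same_trans h; exact: same_sym.
Qed.

Lemma oncyc_same (V : Type) (e f : V * V) s : same_edge e f -> oncyc e s -> oncyc f s.
Proof. case: s => [|x p] // ef; exact: (@onpath_same V e f). Qed.

Lemma onpath_mem (V : eqType) (e : V * V) x p : onpath e x p -> e.1 \in x :: p /\ e.2 \in x :: p.
Proof.
elim: p x => [|y p IH] x //= [h|/IH [h1 h2]].
  clear IH; case: e h => a b; rewrite /same_edge /= => -[[-> ->]|[-> ->]];
    rewrite !in_cons !eqxx ?orbT //.
by rewrite in_cons h1 in_cons h2 !orbT.
Qed.

Lemma oncyc_mem (V : eqType) (e : V * V) s : oncyc e s -> e.1 \in s /\ e.2 \in s.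
Proof.
case: s => [|y p] // h; have [h1 h2] := onpath_mem h.
have hl := mem_last y p.
have H : forall z, z \in last y p :: y :: p -> z \in y :: p.
  by move=> z; rewrite in_cons => /orP [/eqP ->|].
by split; apply: H.
Qed.

Lemma onpath_split (V : Type) (e : V * V) x p : onpath e x p ->
  exists p1 u v p2, x :: p = p1 ++ u :: v :: p2 /\ same_edge e (u, v).
Proof.
elim: p x => [|y p IH] x //= [h|/IH [p1 [u [v [p2 [E h]]]]]].
  by exists [::], x, y, p.
by exists (x :: p1), u, v, p2; rewrite E.
Qed.

Lemma rot_edge (V : eqType) (adj : V -> V -> Prop) e s : cyc adj s -> oncyc e s ->
  exists v W, cyc adj (v :: W) /\ same_edge e (last v W, v) /\
    (forall f, oncyc f s -> oncyc f (v :: W)).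
Proof.
case: s => [|y p] // hc ho.
case: ho => [h|ho]; first by exists y, p.
have [p1 [u [v [p2 [E h]]]]] := onpath_split ho.
have Es : y :: p = rcons p1 u ++ v :: p2 by rewrite cat_rcons.
exists v, (p2 ++ rcons p1 u). rewrite last_cat last_rcons.
split; last split => //.
  have := cyc_rot (p := rcons p1 u) (q := v :: p2). rewrite -Es. by apply.
move=> f; rewrite Es => /oncyc_rot. done.
Qed.

Lemma extract (V : eqType) (adj : V -> V -> Prop) (S : seq V) e W : forall x Q0,
  x \in S -> (forall q, q \in Q0 -> q \notin S) -> walk adj x (Q0 ++ W) ->
  uniq (x :: Q0 ++ W) -> last x (Q0 ++ W) \in S -> onpath e x (Q0 ++ W) ->
  exists a Q b, a \in S /\ b \in S /\ (forall q, q \in Q -> q \notin S) /\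
     walk adj a (rcons Q b) /\ uniq (a :: rcons Q b) /\ onpath e a (rcons Q b).
Proof.
elim: W => [|w W IH] x Q0 xS QS.
  rewrite cats0; case: Q0 QS => [|q Q0] QS //= _ _ hl _.
  by move: (QS _ (mem_last q Q0)); rewrite hl.
rewrite -cat_rcons.
case wS: (w \in S) => hw hu hl ho.
  move/onpath_cat: ho; rewrite last_rcons => -[ho|ho].
    exists x, Q0, w; split; first done. split; first done. split; first done.
    split; first by move/walk_cat: hw => [].
    split; last done.
    by move: hu; rewrite -cat_cons cat_uniq => /and3P [].
  apply: (IH w [::]) => //=.
  - by move/walk_cat: hw; rewrite last_rcons => -[].
  - by move: hu; rewrite cat_rcons -cat_cons cat_uniq => /and3P [].
  - by move: hl; rewrite last_cat last_rcons.
apply: (IH x (rcons Q0 w)) => //.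
move=> q; rewrite mem_rcons in_cons => /orP [/eqP ->|]; first by rewrite wS.
exact: QS.
Qed.

Lemma uniq_cat_disj (V : eqType) (X Y : seq V) : uniq X -> uniq Y ->
  (forall y, y \in Y -> y \notin X) -> uniq (X ++ Y).
Proof. move=> uX uY H; rewrite cat_uniq uX uY andbT; apply/hasPn => y /H //. Qed.

Lemma final (V : eqType) (adj : V -> V -> Prop) (sym : forall x y, adj x y -> adj y x)
  a b R1 R2 Q e1 e3 :
  cyc adj (a :: R1 ++ b :: R2) -> onpath e1 a (rcons R1 b) -> walk adj a (rcons Q b) ->
  uniq (a :: rcons Q b) -> (forall q, q \in Q -> q \notin a :: R1 ++ b :: R2) ->
  onpath e3 a (rcons Q b) -> ~ oncyc e3 (a :: R1 ++ b :: R2) ->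
  exists s, cyc adj s /\ oncyc e1 s /\ oncyc e3 s.
Proof.
move=> [hw [hu hs]] h1 wQ uQ dQ h3 n3.
have hsz : 3 <= size (a :: R1 ++ b :: rev Q).
  rewrite /= size_cat /= size_rev.
  clear -n3 h3; case: R1 n3 => [|r R1] n3 /=; case: Q h3 => [|q Q] h3 /=; rewrite ?addnS ?addSn //.
  by exfalso; apply: n3; apply/oncyc_split; left.
exists (a :: R1 ++ b :: rev Q).
have [w1 _] := (walk_split adj a R1 b R2).1 hw.
split; last first.
  split; apply/oncyc_split; [by left | right; exact: onpath_rev].
split; first by apply/walk_split; split=> //; exact: walk_rev.
split=> //.
have -> : a :: R1 ++ b :: rev Q = (a :: rcons R1 b) ++ rev Q by rewrite /= cat_rcons.
apply: uniq_cat_disj.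
- by move: hu; rewrite -cat_rcons -cat_cons cat_uniq => /and3P [].
- by rewrite rev_uniq; move: uQ; rewrite /= rcons_uniq => /andP [_ /andP [_]].
- move=> y; rewrite mem_rev => /dQ; apply: contra.
  by rewrite -cat_rcons -cat_cons mem_cat => ->.
Qed.

Lemma mem_catC (V : eqType) (x : V) p q : (x \in p ++ q) = (x \in q ++ p).
Proof. by rewrite !mem_cat orbC. Qed.

Lemma main_seq (V : eqType) (adj : V -> V -> Prop) (sym : forall x y, adj x y -> adj y x)
  s1 s2 e1 e2 e3 : cyc adj s1 -> oncyc e1 s1 -> oncyc e2 s1 -> cyc adj s2 -> oncyc e2 s2 ->
  oncyc e3 s2 -> exists s, cyc adj s /\ oncyc e1 s /\ oncyc e3 s.
Proof.
move=> c1 o11 o21 c2 o22 o32.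
case: (classic (oncyc e3 s1)) => n3; first by exists s1.
have [v [W [c2' [hv hW]]]] := rot_edge c2 o22.
have o3 := hW _ o32.
have [ho|ho] : same_edge e3 (last v W, v) \/ onpath e3 v W by exact o3.
  exfalso; apply: n3; apply: oncyc_same o21; exact: (same_trans hv (same_sym ho)).
have [m1 m2] := oncyc_mem o21.
have [vS lS] : v \in s1 /\ last v W \in s1.
  case: hv => [[E1 E2]|[E1 E2]]; simpl in E1, E2.
    by rewrite -E1 -E2.
  by rewrite -E2 -E1.
have [[_ cw] [cu _]] := c2'.
have [a [Q [b [aS [bS [dQ [wQ [uQ hQ]]]]]]]] :=
  @extract V adj s1 e3 W v [::] vS (fun q (h : q \in [::]) => ltac:(done)) cw cu lS ho.
have ab : a != b.
  by move: uQ => /= /andP [+ _]; rewrite mem_rcons in_cons negb_or => /andP [].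
move: c1 o11 n3 dQ bS; case/splitPr: aS => S1 S2 c1 o11 n3 dQ bS.
have c1' := cyc_rot c1.
have o11' := oncyc_rot o11.
have n3' : ~ oncyc e3 ((a :: S2) ++ S1) by move=> h; apply: n3; exact: (oncyc_rot h).
have dQ' : forall q, q \in Q -> q \notin (a :: S2) ++ S1 by move=> q /dQ; rewrite mem_catC.
have bS' : b \in S2 ++ S1.
  by move: bS; rewrite mem_catC /= in_cons eq_sym (negbTE ab).
move: c1' o11' n3' dQ'; rewrite cat_cons.
case/splitPr: bS' => R1 R2 c1' o11' n3' dQ'.
case/oncyc_split: o11' => arc.
  exact: (final sym c1' arc wQ uQ dQ' hQ n3').
have c1'' := cyc_rot (p := a :: R1) (q := b :: R2) c1'.
have n3'' : ~ oncyc e3 ((b :: R2) ++ (a :: R1)) by move=> h; apply: n3'; exact: (oncyc_rot h).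
apply: (final sym c1'' arc (walk_rev sym wQ) _ _ (onpath_rev hQ) n3'').
  by rewrite -rev_uniq rev_cons rev_rcons revK.
by move=> q; rewrite mem_rev => /dQ'; rewrite -cat_cons mem_catC.
Qed.

Lemma nth_onpath (V : Type) (e : V * V) x p x0 : onpath e x p ->
  exists2 i, i < size p & same_edge e (nth x0 (x :: p) i, nth x0 p i).
Proof.
elim: p x => [|y p IH] x //= [h|/IH [i hi h]]; first by exists 0.
by exists i.+1.
Qed.

Lemma onpath_nth (V : Type) (e : V * V) x p x0 i : i < size p ->
  same_edge e (nth x0 (x :: p) i, nth x0 p i) -> onpath e x p.
Proof.
elim: p x i => [|y p IH] x i //=; case: i => [|i] /= hi h; first by left.
by right; apply: (IH y i hi h).
Qed.

Lemma nth_walk (V : Type) (adj : V -> V -> Prop) x p x0 : walk adj x p ->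
  forall i, i < size p -> adj (nth x0 (x :: p) i) (nth x0 p i).
Proof.
elim: p x => [|y p IH] x //= [h1 h2] [|i] //= hi.
exact: IH.
Qed.

Lemma walk_nth (V : Type) (adj : V -> V -> Prop) x p x0 :
  (forall i, i < size p -> adj (nth x0 (x :: p) i) (nth x0 p i)) -> walk adj x p.
Proof.
elim: p x => [|y p IH] x //= H; split; first exact: (H 0).
apply: IH => i hi; exact: (H i.+1).
Qed.

Lemma seq_to_cycle (V : eqType) (adj : V -> V -> Prop) s : cyc adj s ->
  exists n c, is_cycle adj n c /\ forall e, oncyc e s -> edge_on_cycle n c e.
Proof.
case: s => [|y p] // [[hw1 hw2] [hu hs]].
exists (size p).+1, (nth y (y :: p)).
have hl : nth y (y :: p) (size p) = last y p by exact: (nth_last y (y :: p)).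
split.
  split; first exact: hs.
  split.
    move=> i j hi hj E; apply/eqP; rewrite -(@nth_uniq V y (y :: p) i j hi hj hu); exact/eqP.
  move=> i hi; rewrite ltnS leq_eqVlt in hi; case/orP: hi => [/eqP ->|hi].
    by rewrite modnn hl.
  rewrite modn_small ?ltnS //=; exact: nth_walk.
move=> e [h|h].
  by exists (size p) => //; rewrite modnn hl.
have [i hi he] := nth_onpath y h.
exists i; first exact: ltnW.
by rewrite modn_small.
Qed.

Lemma cycle_to_seq (V : eqType) (adj : V -> V -> Prop) n c : is_cycle adj n c ->
  exists s, cyc adj s /\ forall e, edge_on_cycle n c e -> oncyc e s.
Proof.
move=> [hn [hi ha]]; case: n hn hi ha => [|m] // hn hi ha.
set p := map c (iota 1 m).
have Hn : forall i, i < m.+1 -> nth (c 0) (c 0 :: p) i = c i.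
  by move=> i h; exact: (nth_mkseq (c 0) c h).
have sp : size p = m by rewrite /p size_map size_iota.
have hl : last (c 0) p = c m.
  rewrite -(Hn m (ltnSn m)) -sp; exact: (esym (nth_last (c 0) (c 0 :: p))).
exists (c 0 :: p); split.
  split.
    rewrite /= hl; split; first by have := ha m (ltnSn m); rewrite modnn.
    apply: (walk_nth (x0 := c 0)) => i; rewrite sp => him.
    have -> : nth (c 0) p i = nth (c 0) (c 0 :: p) i.+1 by [].
    have h1 : i < m.+1 by rewrite ltnS ltnW.
have h2 : i.+1 < m.+1 by rewrite ltnS.
rewrite (Hn _ h1) (Hn _ h2).
    by have := ha i (ltnW him); rewrite modn_small.
  split; last by rewrite /= sp.
  change (uniq (map c (iota 0 m.+1))).
  rewrite map_inj_in_uniq ?iota_uniq // => i j; rewrite !mem_iota !add0n.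
  by move=> /andP [_ i1] /andP [_ j1]; apply: hi.
move=> e [i him he]; rewrite ltnS leq_eqVlt in him; case/orP: him => [/eqP Ei|him].
  by left; rewrite hl; move: he; rewrite Ei modnn.
right; apply: (onpath_nth (x0 := c 0) (i := i)); first by rewrite sp.
have -> : nth (c 0) p i = nth (c 0) (c 0 :: p) i.+1 by [].
have h1 : i < m.+1 by rewrite ltnS ltnW.
have h2 : i.+1 < m.+1 by rewrite ltnS.
rewrite (Hn _ h1) (Hn _ h2).
by move: he; rewrite modn_small.
Qed.

Lemma eoc_same (V : Type) n (c : nat -> V) e f : same_edge e f -> edge_on_cycle n c e -> edge_on_cycle n c f.
Proof. move=> ef [i hi h]; exists i => //; exact: (same_trans (same_sym ef) h). Qed.

Lemma cong_trans (V : eqType) (adj : V -> V -> Prop) (sym : forall x y, adj x y -> adj y x)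
  e1 e2 e3 : edge_cong adj e1 e2 -> edge_cong adj e2 e3 -> edge_cong adj e1 e3.
Proof.
case=> [s12|[n [c [hc [o1 o2]]]]].
  case=> [s23|[n [c [hc [o2 o3]]]]]; first by left; exact: (same_trans s12 s23).
  by right; exists n, c; split=> //; split=> //; exact: (eoc_same (same_sym s12) o2).
case=> [s23|[n' [c' [hc' [o2' o3']]]]].
  by right; exists n, c; split=> //; split=> //; exact: (eoc_same s23 o2).
have [s1 [cs1 Hs1]] := cycle_to_seq hc.
have [s2 [cs2 Hs2]] := cycle_to_seq hc'.
have [s [cs [os1 os3]]] := main_seq sym cs1 (Hs1 _ o1) (Hs1 _ o2) cs2 (Hs2 _ o2') (Hs2 _ o3').
have [k [d [hd Hd]]] := seq_to_cycle cs.
by right; exists k, d; split=> //; split; apply: Hd.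
Qed.

Lemma cong_sym (V : Type) (adj : V -> V -> Prop) e1 e2 : edge_cong adj e1 e2 -> edge_cong adj e2 e1.
Proof. case=> [h|[n [c [hc [o1 o2]]]]]; first by left; exact: same_sym. by right; exists n, c. Qed.

Lemma sig_eq (T : Type) (P : T -> Prop) (x y : {v | P v}) : proj1_sig x = proj1_sig y -> x = y.
Proof. case: x y => [x px] [y py] /= E; subst y; f_equal; apply: proof_irrelevance. Qed.

Lemma same_map (V : Type) (g : V -> V) (e f : V * V) :
  same_edge e f -> same_edge (g e.1, g e.2) (g f.1, g f.2).
Proof. case: e f => [a b] [c d]; rewrite /same_edge /=; case=> -[-> ->]; tauto. Qed.

Lemma aut_cong (V : Type) (adj : V -> V -> Prop) g e f : is_aut adj g ->
  edge_cong adj e f -> edge_cong adj (g e.1, g e.2) (g f.1, g f.2).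
Proof.
move=> [gb Hg]; case=> [h|[n [c [[hn [hi ha]] [o1 o2]]]]]; first by left; exact: same_map.
right; exists n, (fun i => g (c i)); split; last split.
- split=> //; split; last by move=> i /ha /Hg.
  by move=> i j ii ij /(bij_inj gb) /hi; apply.
- by case: o1 => i i1 h; exists i => //; exact: (same_map g h).
- by case: o2 => i i1 h; exists i => //; exact: (same_map g h).
Qed.

Lemma aut_inv (V : Type) (adj : V -> V -> Prop) g : is_aut adj g ->
  exists h, is_aut adj h /\ cancel g h /\ cancel h g.
Proof.
move=> [[h gh hg] Hg]; exists h; split=> //; split; first exact: (Bijective hg gh).
by move=> x y; rewrite (Hg (h x) (h y)) !hg.
Qed.

Lemma aut_cong_iff (V : Type) (adj : V -> V -> Prop) g e f : is_aut adj g ->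
  edge_cong adj e f <-> edge_cong adj (g e.1, g e.2) (g f.1, g f.2).
Proof.
move=> ag; split; first exact: aut_cong.
have [h [ah [gh hg]]] := aut_inv ag.
move=> /(aut_cong ah) /=; rewrite !gh; by case: e f => [? ?] [? ?].
Qed.

Lemma lobe_trans_of (V : eqType) (adj : V -> V -> Prop) (sym : forall x y, adj x y -> adj y x) :
  edge_transitive adj -> lobe_transitive adj.
Proof.
move=> ET e1 e2 h1 h2; have [g [ag sg]] := ET e1 e2 h1 h2.
exists g; split=> // f hf; rewrite (aut_cong_iff _ _ ag); split=> H.
  exact: (cong_trans sym H (or_introl sg)).
exact: (cong_trans sym H (or_introl (same_sym sg))).
Qed.

Lemma lobe_aut_of (V : eqType) (adj : V -> V -> Prop) (sym : forall x y, adj x y -> adj y x)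
  e g E F : is_aut adj g -> edge_cong adj E e -> edge_cong adj F e -> same_edge (g E.1, g E.2) F ->
  exists G : lobe_type adj e -> lobe_type adj e, is_aut (@lobe_adj V adj e) G /\
    forall x, proj1_sig (G x) = g (proj1_sig x).
Proof.
move=> ag cE cF sg.
have [h [ah [gh hg]]] := aut_inv ag.
have pg : forall f, edge_cong adj f e -> edge_cong adj (g f.1, g f.2) e.
  move=> f cf.
  have cfE : edge_cong adj f E by exact: (cong_trans sym cf (cong_sym cE)).
  have H := aut_cong ag cfE.
  exact: (cong_trans sym H (cong_trans sym (or_introl sg) cF)).
have ph : forall f, edge_cong adj f e -> edge_cong adj (h f.1, h f.2) e.
  move=> f cf.
  have cfE : edge_cong adj f (g E.1, g E.2).
    exact: (cong_trans sym cf (cong_trans sym (cong_sym cF) (or_introl (same_sym sg)))).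
  have H := aut_cong ah cfE; simpl in H; rewrite !gh in H.
  move: cE H; case: E {cfE sg pg} => [? ?] cE H; exact: (cong_trans sym H cE).
have lg : forall v, lobe_vertex adj e v -> lobe_vertex adj e (g v).
  move=> v [w [avw cw]]; exists (g w); split; first exact: (proj1 (proj2 ag v w) avw).
  exact: (pg (v, w) cw).
have lh : forall v, lobe_vertex adj e v -> lobe_vertex adj e (h v).
  move=> v [w [avw cw]]; exists (h w); split; first exact: (proj1 (proj2 ah v w) avw).
  exact: (ph (v, w) cw).
pose G := fun x : lobe_type adj e => exist _ (g (proj1_sig x)) (lg _ (proj2_sig x)).
pose H := fun x : lobe_type adj e => exist _ (h (proj1_sig x)) (lh _ (proj2_sig x)).
exists G; split=> //; split.
  by exists H => x; apply: sig_eq => /=; rewrite ?gh ?hg.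
move=> x y; rewrite /lobe_adj /=; split.
  by case=> a c; split; [exact: (proj1 (proj2 ag _ _) a) | exact: (pg (_, _) c)].
case=> a c; split; first exact: (proj2 (proj2 ag _ _) a).
by have := ph (_, _) c; rewrite /= !gh.
Qed.

Theorem lemma4p1 (V : countType) (adj : V -> V -> Prop) :
  simple_graph adj -> connected_graph adj ->
  (edge_transitive adj ->
     lobe_transitive adj /\
     forall e, is_edge adj e -> edge_transitive (@lobe_adj V adj e)) /\
  (arc_transitive adj ->
     lobe_transitive adj /\
     forall e, is_edge adj e -> arc_transitive (@lobe_adj V adj e)).
Proof.
move=> [sym irr] _.
have ETA : arc_transitive adj -> edge_transitive adj.
  move=> AT e f he hf; have [g [ag [g1 g2]]] := AT _ _ _ _ he hf.
  by exists g; split=> //; left.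
split=> [ET|AT]; split.
- exact: lobe_trans_of.
- move=> e he [E1 E2] [F1 F2] [aE cE] [aF cF].
  have [g [ag sg]] := ET (proj1_sig E1, proj1_sig E2) (proj1_sig F1, proj1_sig F2) aE aF.
  have [G [aG HG]] := lobe_aut_of sym ag cE cF sg.
  exists G; split=> //.
  by case: sg => /= -[a b]; [left | right]; split; apply: sig_eq; rewrite HG.
- exact: lobe_trans_of (ETA AT).
- move=> e he E1 E2 F1 F2 [aE cE] [aF cF].
  have [g [ag [g1 g2]]] := AT _ _ _ _ aE aF.
  have [G [aG HG]] := lobe_aut_of (E := (proj1_sig E1, proj1_sig E2))
    (F := (proj1_sig F1, proj1_sig F2)) sym ag cE cF (or_introl (conj g1 g2)).
  by exists G; split=> //; split; apply: sig_eq; rewrite HG.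
Qed.
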